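(* Assume $A$ is good. If $w\in\Sigma$ satisfies $I^*(w)<\infty$, then there exists $k\ge0$ with $\sigma^k(w)\in M$, i.e. $w$ is in a preimage of the support of the maximizing probability of $A^*$.
   Context: $\Sigma=\{0,1\}^{\mathbb N}$ with metric $d(u,v)=2^{-n}$, $n$ the first index of disagreement; $\sigma$ is the shift. $A^*:\Sigma\to\mathbb R$ is a Hölder potential (the dual potential of a Hölder $A$ via an involution kernel) with $m(A^* )=\max\{\int A^*d\nu:\nu \text{ $\sigma$-invariant}\}=0$; assume its maximizing probability $\mu^*_\infty$ is unique and supported on a single periodic orbit $M$ of $\sigma$. $V^*$ is a calibrated subaction for $A^*$: $V^*(w)=\max_{\sigma u=w}[V^*(u)+A^*(u)]$; $R^*(w)=V^*(\sigma w)-V^*(w)-A^*(w)\ge0$ and $I^*(w)=\sum_{n\ge0}R^*(\sigma^nw)\in[0,\infty]$. It is known (used here) that if $I^*(w)<\infty$ then $\frac1n\sum_{j<n}\delta_{\sigma^jw}\to\mu^*_\infty$ weakly. Let $P=\{w\notin M:\sigma(w)\in M\}$; $A$ is good if $R^*(w)>0$ for all $w\in P$. *)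

(* Defs.v *)
From Stdlib Require Import Reals Lra.
Open Scope R_scope.

Definition Sigma := nat -> bool.

Definition shift (w : Sigma) : Sigma := fun n => w (S n).

Definition shiftn (k : nat) (w : Sigma) : Sigma := Nat.iter k shift w.

(** The sequence b w (the two preimages of w under sigma are bcons false w, bcons true w). *)
Definition bcons (b : bool) (w : Sigma) : Sigma :=
  fun n => match n with O => b | S k => w k end.

(** [agree n u v]: u and v agree on the indices 0..n-1, i.e. d(u,v) <= 2^{-n}
    for the metric d(u,v) = 2^{-(first index of disagreement)}. *)
Definition agree (n : nat) (u v : Sigma) : Prop :=
  forall i, (i < n)%nat -> u i = v i.

Definition continuous_Sigma (f : Sigma -> R) : Prop :=
  forall u eps, 0 < eps -> exists n, forall v, agree n u v -> Rabs (f u - f v) < eps.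

(** Hölder continuity: |f u - f v| <= C d(u,v)^alpha, written via agree
    (d(u,v) <= 2^{-n} iff agree n u v). *)
Definition holder (f : Sigma -> R) : Prop :=
  exists C alpha, 0 < alpha /\
    forall n u v, agree n u v -> Rabs (f u - f v) <= C * Rpower (/2) (alpha * INR n).

(** sigma-invariant Borel probability measures on the compact space Sigma,
    represented (Riesz) as normalized positive sigma-invariant linear
    functionals on continuous functions. *)
Definition invariant_probability (L : (Sigma -> R) -> R) : Prop :=
  (forall f g a b, continuous_Sigma f -> continuous_Sigma g ->
      L (fun x => a * f x + b * g x) = a * L f + b * L g) /\
  (forall f, continuous_Sigma f -> (forall x, 0 <= f x) -> 0 <= L f) /\
  L (fun _ => 1) = 1 /\
  (forall f, continuous_Sigma f -> L (fun x => f (shift x)) = L f).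

(** The periodic orbit M of x0 (period p, iter shift p x0 = x0). *)
Definition orbit (x0 : Sigma) (w : Sigma) : Prop := exists i, w = shiftn i x0.

Definition orbit_measure (x0 : Sigma) (p : nat) (f : Sigma -> R) : R :=
  / INR p * sum_f_R0 (fun i => f (shiftn i x0)) (p - 1).

Definition calibrated (A V : Sigma -> R) : Prop :=
  forall w, V w = Rmax (V (bcons false w) + A (bcons false w))
                       (V (bcons true w) + A (bcons true w)).

Definition Rstar (A V : Sigma -> R) (w : Sigma) : R := V (shift w) - V w - A w.

Definition Istar_finite (A V : Sigma -> R) (w : Sigma) : Prop :=
  exists l, Un_cv (fun N => sum_f_R0 (fun n => Rstar A V (shiftn n w)) N) l.

Definition empirical_converges (w : Sigma) (mu : (Sigma -> R) -> R) : Prop :=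
  forall f, continuous_Sigma f ->
    Un_cv (fun n => / INR (S n) * sum_f_R0 (fun j => f (shiftn j w)) n) (mu f).

(* Main.v *)
Require Import Defs.
From Stdlib Require Import Reals Lra Lia Arith Classical ClassicalEpsilon FunctionalExtensionality.
Open Scope R_scope.

Lemma shiftn_S k w : shiftn (S k) w = shift (shiftn k w).
Proof. reflexivity. Qed.

Lemma shiftn_app k w j : shiftn k w j = w (k + j)%nat.
Proof.
  revert j; induction k; intro j; [reflexivity|].
  rewrite shiftn_S; unfold shift; rewrite IHk; f_equal; lia.
Qed.

Lemma shiftn_add a b w : shiftn a (shiftn b w) = shiftn (a + b) w.
Proof.
  apply functional_extensionality; intro j; rewrite !shiftn_app; f_equal; lia.
Qed.

Lemma agree_mono n m u v : (m <= n)%nat -> agree n u v -> agree m u v.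
Proof. intros H H1 i Hi; apply H1; lia. Qed.

Lemma holder_cont f : holder f -> continuous_Sigma f.
Proof.
  intros [C [al [Hal H]]] u eps Heps.
  set (r := Rpower (/2) al).
  assert (Hln : ln (/2) < 0) by (rewrite <- ln_1; apply ln_increasing; lra).
  assert (Hr0 : 0 < r) by (unfold r, Rpower; apply exp_pos).
  assert (Hr1 : r < 1).
  { unfold r, Rpower. rewrite <- exp_0. apply exp_increasing.
    assert (0 < al * (- ln (/2))) by (apply Rmult_lt_0_compat; lra). lra. }
  assert (HC : 0 < Rabs C + 1) by (pose proof (Rabs_pos C); lra).
  destruct (pow_lt_1_zero r ltac:(rewrite Rabs_pos_eq; lra) (eps / (Rabs C + 1)))
    as [N HN]. { apply Rdiv_lt_0_compat; lra. }
  exists N; intros v Hv.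
  specialize (H N u v Hv). specialize (HN N (le_n _)).
  assert (E : Rpower (/2) (al * INR N) = r ^ N).
  { rewrite <- Rpower_mult. apply Rpower_pow. unfold r, Rpower; apply exp_pos. }
  rewrite E in H. rewrite Rabs_pos_eq in HN by (apply pow_le; lra).
  assert (C * r ^ N <= Rabs C * r ^ N).
  { apply Rmult_le_compat_r; [apply pow_le; lra | apply Rle_abs]. }
  assert (Rabs C * r ^ N < eps).
  { apply Rmult_lt_compat_l with (r := Rabs C + 1) in HN; [|lra].
    unfold Rdiv in HN. rewrite <- Rmult_assoc, Rinv_r_simpl_m in HN by lra.
    pose proof (pow_le r N ltac:(lra)). nra. }
  lra.
Qed.

Lemma cont_shift f : continuous_Sigma f -> continuous_Sigma (fun v => f (shift v)).
Proof.
  intros H u eps He. destruct (H (shift u) eps He) as [n Hn].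
  exists (S n); intros v Hv. apply Hn. intros i Hi. apply (Hv (S i)). lia.
Qed.

Lemma cont_Rstar A V : continuous_Sigma A -> continuous_Sigma V -> continuous_Sigma (Rstar A V).
Proof.
  intros HA HV u eps He.
  destruct (cont_shift V HV u (eps/3)) as [n1 H1]; [lra|].
  destruct (HV u (eps/3)) as [n2 H2]; [lra|].
  destruct (HA u (eps/3)) as [n3 H3]; [lra|].
  exists (max n1 (max n2 n3)); intros v Hv.
  specialize (H1 v (agree_mono (max n1 (max n2 n3)) n1 u v ltac:(lia) Hv)).
  specialize (H2 v (agree_mono (max n1 (max n2 n3)) n2 u v ltac:(lia) Hv)).
  specialize (H3 v (agree_mono (max n1 (max n2 n3)) n3 u v ltac:(lia) Hv)).
  unfold Rstar. unfold Rabs in *. repeat destruct Rcase_abs; lra.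
Qed.

Section Orb.
Variables (x0 : Sigma) (p : nat) (hp : (0 < p)%nat) (hper : shiftn p x0 = x0).

Lemma x0_per k : x0 (k + p)%nat = x0 k.
Proof.
  assert (H := f_equal (fun f => f k) hper). simpl in H.
  rewrite shiftn_app in H. rewrite <- H. f_equal; lia.
Qed.

Lemma x0_perq q k : x0 (k + p * q)%nat = x0 k.
Proof.
  induction q. - f_equal; lia.
  - replace (k + p * S q)%nat with ((k + p * q) + p)%nat by lia. rewrite x0_per; auto.
Qed.

Lemma orbit_mod i : shiftn i x0 = shiftn (i mod p) x0.
Proof.
  apply functional_extensionality; intro j. rewrite !shiftn_app.
  rewrite (Nat.div_mod_eq i p) at 1.
  replace (p * (i / p) + i mod p + j)%nat with ((i mod p + j) + p * (i / p))%nat by lia.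
  apply x0_perq.
Qed.

Lemma orbit_per u : orbit x0 u -> forall j, u (j + p)%nat = u j.
Proof.
  intros [i ->] j. rewrite !shiftn_app.
  replace (i + (j + p))%nat with ((i + j) + p)%nat by lia. apply x0_per.
Qed.

Lemma orbit_eq u v : orbit x0 u -> orbit x0 v -> agree p u v -> u = v.
Proof.
  intros Hu Hv Ha. apply functional_extensionality; intro j.
  induction j as [j IH] using (well_founded_induction Nat.lt_wf_0).
  destruct (Nat.lt_ge_cases j p) as [Hj|Hj]. - apply Ha; auto.
  - replace j with ((j - p) + p)%nat by lia.
    rewrite (orbit_per u Hu), (orbit_per v Hv). apply IH; lia.
Qed.

Lemma orbit_shift u : orbit x0 u -> orbit x0 (shift u).
Proof. intros [i ->]. exists (S i). reflexivity. Qed.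

Lemma orbit_shiftn k u : orbit x0 u -> orbit x0 (shiftn k u).
Proof. intros H; induction k; [exact H|]. rewrite shiftn_S; apply orbit_shift; auto. Qed.

Lemma orbit_in i : orbit x0 (shiftn i x0).
Proof. exists i; reflexivity. Qed.

End Orb.

Lemma uniform_bound (R : Sigma -> R) (x0 : Sigma) (hR : continuous_Sigma R)
  (hgood : forall w, ~ orbit x0 w -> orbit x0 (shift w) -> 0 < R w) :
  forall n, exists N0 c, 0 < c /\ forall b i v, (i < n)%nat ->
     ~ orbit x0 (bcons b (shiftn i x0)) -> agree N0 (bcons b (shiftn i x0)) v -> c <= R v.
Proof.
  assert (single : forall q, ~ orbit x0 q -> orbit x0 (shift q) ->
            exists N c, 0 < c /\ forall v, agree N q v -> c <= R v).
  { intros q H1 H2. pose proof (hgood q H1 H2).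
    destruct (hR q (R q / 2)) as [N HN]; [lra|].
    exists N, (R q / 2); split; [lra|]. intros v Hv. specialize (HN v Hv).
    unfold Rabs in HN; destruct Rcase_abs; lra. }
  assert (pt : forall b i, exists N c, 0 < c /\
      (~ orbit x0 (bcons b (shiftn i x0)) -> forall v, agree N (bcons b (shiftn i x0)) v -> c <= R v)).
  { intros b i. destruct (classic (orbit x0 (bcons b (shiftn i x0)))) as [H|H].
    - exists O, 1; split; [lra|]. intro; contradiction.
    - destruct (single _ H) as [N [c [Hc Hv]]].
      + exists i; reflexivity.
      + exists N, c; split; auto. }
  induction n.
  - exists O, 1; split; [lra|]. intros; lia.
  - destruct IHn as [N [c [Hc HI]]].
    destruct (pt false n) as [N1 [c1 [Hc1 H1]]].
    destruct (pt true n) as [N2 [c2 [Hc2 H2]]].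
    exists (max N (max N1 N2)), (Rmin c (Rmin c1 c2)).
    split. { repeat apply Rmin_glb_lt; auto. }
    intros b i v Hi Hno Ha.
    destruct (Nat.eq_dec i n) as [->|Hne].
    + destruct b.
      * eapply Rle_trans; [|apply H2; auto; eapply (agree_mono (max N (max N1 N2))); [lia|exact Ha]].
        eapply Rle_trans; apply Rmin_r.
      * eapply Rle_trans; [|apply H1; auto; eapply (agree_mono (max N (max N1 N2))); [lia|exact Ha]].
        eapply Rle_trans; [apply Rmin_r|apply Rmin_l].
    + eapply Rle_trans; [apply Rmin_l|]. apply (HI b i v); [lia|auto|].
      eapply (agree_mono (max N (max N1 N2))); [lia|exact Ha].
Qed.

Lemma sum_bound (g : nat -> R) n0 : (forall j, 0 <= g j <= 1) -> (forall j, (n0 <= j)%nat -> g j = 0) ->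
  forall n, sum_f_R0 g n <= INR (Nat.min (S n) n0).
Proof.
  intros H1 H2 n. induction n; simpl sum_f_R0.
  - destruct n0. + rewrite H2 by lia. simpl; lra. + simpl. specialize (H1 O); lra.
  - destruct (Compare_dec.le_lt_dec n0 (S n)) as [Hl|Hl].
    + rewrite H2 by lia. replace (Nat.min (S (S n)) n0) with n0 by lia.
      assert (INR (Nat.min (S n) n0) <= INR n0) by (apply le_INR; lia). lra.
    + replace (Nat.min (S (S n)) n0) with (S (Nat.min (S n) n0)) by lia.
      rewrite S_INR. specialize (H1 (S n)). lra.
Qed.

Lemma avg_not1 (g : nat -> R) n0 : (forall j, 0 <= g j <= 1) -> (forall j, (n0 <= j)%nat -> g j = 0) ->
  ~ Un_cv (fun n => / INR (S n) * sum_f_R0 g n) 1.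
Proof.
  intros H1 H2 Hc. destruct (Hc (1/2)) as [N HN]; [lra|].
  set (n := max N (2 * n0)).
  specialize (HN n ltac:(unfold n; lia)). unfold Rdist in HN.
  pose proof (sum_bound g n0 H1 H2 n).
  assert (INR (Nat.min (S n) n0) <= INR n0) by (apply le_INR; lia).
  assert (HS : 2 * INR n0 + 1 <= INR (S n)).
  { rewrite S_INR. assert (INR (2 * n0) <= INR n) by (apply le_INR; unfold n; lia).
    rewrite mult_INR in H3. simpl in H3. lra. }
  assert (0 < INR (S n)) by (apply lt_0_INR; lia).
  assert (/ INR (S n) * sum_f_R0 g n <= / INR (S n) * INR n0).
  { apply Rmult_le_compat_l; [left; apply Rinv_0_lt_compat; auto| lra]. }
  assert (/ INR (S n) * INR n0 < 1/2).
  { apply (Rmult_lt_reg_l (INR (S n))); auto. rewrite <- Rmult_assoc, Rinv_r by lra.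
    pose proof (pos_INR n0). lra. }
  unfold Rabs in HN; destruct Rcase_abs; lra.
Qed.

Lemma terms_to0 (u : nat -> R) l : Un_cv (fun N => sum_f_R0 u N) l ->
  forall c, 0 < c -> exists K, forall n, (K <= n)%nat -> u n < c.
Proof.
  intros H c Hc. destruct (H (c/2)) as [N HN]; [lra|].
  exists (S N). intros n Hn. destruct n; [lia|].
  pose proof (HN (S n) ltac:(lia)). pose proof (HN n ltac:(lia)).
  unfold Rdist in *. simpl sum_f_R0 in H0.
  unfold Rabs in *; repeat destruct Rcase_abs; lra.
Qed.

Definition Cn (x0 w : Sigma) (K n : nat) : Prop := exists i, agree K (shiftn n w) (shiftn i x0).

Lemma stepA x0 p (hp : (0 < p)%nat) (hper : shiftn p x0 = x0) w N T :
  (p <= N)%nat -> (forall n, (T <= n)%nat -> Cn x0 w (S N) n) -> orbit x0 (shiftn T w).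
Proof.
  intros HN H. destruct (H T (le_n _)) as [i0 H0]. set (y0 := shiftn i0 x0) in *.
  assert (Cl : forall j, agree (S N) (shiftn (j + T) w) (shiftn j y0)).
  { induction j. - exact H0.
    - destruct (H (S j + T)%nat ltac:(lia)) as [i Hi].
      assert (E : shiftn i x0 = shiftn (S j) y0).
      { apply (orbit_eq x0 p hp hper); [apply orbit_in| apply orbit_shiftn; apply orbit_in|].
        intros k Hk. rewrite <- Hi by lia.
        specialize (IHj (S k) ltac:(lia)). rewrite !shiftn_app in *.
        replace (S j + T + k)%nat with (j + T + S k)%nat by lia.
        replace (S j + k)%nat with (j + S k)%nat by lia. exact IHj. }
      rewrite <- E; exact Hi. }
  replace (shiftn T w) with y0. { apply orbit_in. }
  apply functional_extensionality; intro j.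
  specialize (Cl j O ltac:(lia)). unfold y0 in *. rewrite !shiftn_app in *.
  rewrite !Nat.add_0_r in Cl. replace (T + j)%nat with (j + T)%nat by lia. rewrite Cl. f_equal; lia.
Qed.

Lemma entry x0 w N a : ~ Cn x0 w (S N) a -> forall b, (a < b)%nat -> Cn x0 w N b ->
  exists m, (a <= m)%nat /\ ~ Cn x0 w (S N) m /\ Cn x0 w N (S m).
Proof.
  intros Ha b. induction b; intros Hab Hb; [lia|].
  destruct (Nat.eq_dec a b) as [->|Hne]. { exists b; auto. }
  destruct (classic (Cn x0 w (S N) b)) as [Hc|Hc].
  - destruct IHb as [m Hm]; [lia| |exists m; exact Hm].
    destruct Hc as [i Hi]; exists i; eapply agree_mono; [|exact Hi]; lia.
  - exists b; repeat split; auto; lia.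
Qed.

Theorem mainTheorem5
  (Astar Vstar : Sigma -> R) (x0 : Sigma) (p : nat)
  (hA : holder Astar)
  (hp : (0 < p)%nat) (hper : shiftn p x0 = x0)
  (hm_le : forall L, invariant_probability L -> L Astar <= 0)
  (hm_att : exists L, invariant_probability L /\ L Astar = 0)
  (hmax : forall L, invariant_probability L -> L Astar = 0 ->
            forall f, continuous_Sigma f -> L f = orbit_measure x0 p f)
  (hVc : continuous_Sigma Vstar) (hcal : calibrated Astar Vstar)
  (hknown : forall w, Istar_finite Astar Vstar w ->
              empirical_converges w (orbit_measure x0 p))
  (hgood : forall w, ~ orbit x0 w -> orbit x0 (shift w) -> 0 < Rstar Astar Vstar w)
  (w : Sigma) (hI : Istar_finite Astar Vstar w) :
  exists k : nat, orbit x0 (shiftn k w).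
Proof.
  apply NNPP; intro Hno.
  assert (Hno' : forall k, ~ orbit x0 (shiftn k w)) by (intros k Hk; apply Hno; exists k; auto).
  clear Hno.
  pose proof (cont_Rstar _ _ (holder_cont _ hA) hVc) as HRc.
  destruct (uniform_bound _ x0 HRc hgood p) as [N0 [c [Hc HU]]].
  set (N := max N0 p).
  assert (H1 : forall T, exists a, (T <= a)%nat /\ ~ Cn x0 w (S N) a).
  { intro T. apply NNPP; intro H. apply (Hno' T).
    apply (stepA x0 p hp hper w N T); [unfold N; lia|].
    intros n Hn. apply NNPP; intro H'. apply H; exists n; auto. }
  assert (H2 : forall T, exists b, (T <= b)%nat /\ Cn x0 w N b).
  { intro T. apply NNPP; intro H.
    set (P := fun u => exists i, agree N u (shiftn i x0)).
    set (f := fun u => if excluded_middle_informative (P u) then 1 else 0).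
    assert (fc : continuous_Sigma f).
    { intros u eps He. exists N. intros v Hv.
      assert (f u = f v).
      { unfold f. destruct excluded_middle_informative as [Hu|Hu];
        destruct excluded_middle_informative as [Hv'|Hv']; auto; exfalso.
        - apply Hv'. destruct Hu as [i Hi]; exists i; intros k Hk.
          rewrite <- Hv, Hi; auto.
        - apply Hu. destruct Hv' as [i Hi]; exists i; intros k Hk.
          rewrite Hv, Hi; auto. }
      rewrite H0, Rminus_diag, Rabs_R0; auto. }
    assert (fm : orbit_measure x0 p f = 1).
    { unfold orbit_measure. rewrite (sum_eq _ (fun _ => 1)).
      - rewrite sum_cte. replace (S (p - 1)) with p by lia.
        assert (0 < INR p) by (apply lt_0_INR; lia). field; lra.
      - intros i _. unfold f. destruct excluded_middle_informative as [Hu|Hu]; auto.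
        exfalso; apply Hu. exists i; intros k Hk; auto. }
    pose proof (hknown w hI f fc) as Hcv. rewrite fm in Hcv.
    apply (avg_not1 (fun j => f (shiftn j w)) T); [| |exact Hcv].
    - intro j; unfold f; destruct excluded_middle_informative; lra.
    - intros j Hj. unfold f; destruct excluded_middle_informative as [Hu|Hu]; auto.
      exfalso; apply H; exists j; split; auto. }
  destruct hI as [l Hl].
  destruct (terms_to0 _ l Hl c Hc) as [K HK].
  destruct (H1 K) as [a [Ha1 Ha2]].
  destruct (H2 (S a)) as [b [Hb1 Hb2]].
  destruct (entry x0 w N a Ha2 b ltac:(lia) Hb2) as [m [Hm1 [Hm2 [i Hm3]]]].
  specialize (HK m ltac:(lia)). simpl in HK.
  set (b0 := shiftn m w O).
  assert (Ew : shiftn m w = bcons b0 (shiftn (S m) w)).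
  { apply functional_extensionality; intros [|k]; [reflexivity|].
    change (shiftn m w (S k) = shiftn (S m) w k). rewrite !shiftn_app. f_equal; lia. }
  assert (Hnq : ~ orbit x0 (bcons b0 (shiftn (i mod p) x0))).
  { intros [j Hj]. apply Hm2. exists j. rewrite <- Hj, Ew, <- orbit_mod by auto.
    intros [|k] Hk; simpl; auto. apply Hm3; lia. }
  assert (c <= Rstar Astar Vstar (shiftn m w)).
  { apply (HU b0 (i mod p)); [apply Nat.mod_upper_bound; lia|auto|].
    rewrite Ew, <- orbit_mod by auto. intros [|k] Hk; simpl; auto.
    symmetry; apply Hm3; unfold N in *; lia. }
  lra.
Qed.
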